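(* Up to isomorphism, there are exactly five Frobenius objects in $\mathbf{Rel}$ whose underlying set has two elements. Writing the set as $X=\{a,b\}$, they are (pairwise non-isomorphic): (1) $\eta=\{a\}$, $\varepsilon=\{a\}$, $\tilde\mu(a,a)=\{a\}$, $\tilde\mu(a,b)=\tilde\mu(b,a)=\{b\}$, $\tilde\mu(b,b)=\{a\}$; (2) $\eta=\{a\}$, $\varepsilon=\{a\}$, $\tilde\mu(a,a)=\{a\}$, $\tilde\mu(a,b)=\tilde\mu(b,a)=\{b\}$, $\tilde\mu(b,b)=\{a,b\}$; (3) $\eta=\{a\}$, $\varepsilon=\{b\}$, $\tilde\mu(a,a)=\{a\}$, $\tilde\mu(a,b)=\tilde\mu(b,a)=\{b\}$, $\tilde\mu(b,b)=\{a\}$; (4) $\eta=\{a\}$, $\varepsilon=\{b\}$, $\tilde\mu(a,a)=\{a\}$, $\tilde\mu(a,b)=\tilde\mu(b,a)=\{b\}$, $\tilde\mu(b,b)=\emptyset$; (5) $\eta=\{a,b\}$, $\varepsilon=\{a,b\}$, $\tilde\mu(a,a)=\{a\}$, $\tilde\mu(b,b)=\{b\}$, $\tilde\mu(a,b)=\tilde\mu(b,a)=\emptyset$.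
   Context: $\mathbf{Rel}$ is the monoidal category whose objects are sets, morphisms $X\to Y$ are relations $R\subseteq X\times Y$, composition is $S\circ R=\{(x,z):\exists y,(x,y)\in R,(y,z)\in S\}$, identities are diagonals, the monoidal product is the Cartesian product and the unit is $\{\bullet\}$. A relation $R\subseteq X\times Y$ is identified with $\tilde R:X\to\mathcal{P}(Y)$, $\tilde R(x)=\{y:(x,y)\in R\}$. A Frobenius object in $\mathbf{Rel}$ is a set $X$ with unit $\eta\subseteq X$ (relation $\{\bullet\}\to X$), counit $\varepsilon\subseteq X$ (relation $X\to\{\bullet\}$) and multiplication $\mu\subseteq X\times X\times X$ (relation $X\times X\to X$, described by $\tilde\mu:X\times X\to\mathcal{P}(X)$) satisfying unitality $\mu\circ(\mathbf{1}\times\eta)=\mu\circ(\eta\times\mathbf{1})=\mathbf{1}$, associativity $\mu\circ(\mathbf{1}\times\mu)=\mu\circ(\mu\times\mathbf{1})$, and nondegeneracy: there exists a relation $\beta:\{\bullet\}\to X\times X$ with $(\varepsilon\times\mathbf{1})\circ(\mu\times\mathbf{1})\circ(\mathbf{1}\times\beta)=(\mathbf{1}\times\varepsilon)\circ(\mathbf{1}\times\mu)\circ(\beta\times\mathbf{1})=\mathbf{1}$. An isomorphism between Frobenius objects $(X,\eta,\varepsilon,\tilde\mu)$ and $(X',\eta',\varepsilon',\tilde\mu')$ is a bijection $f:X\to X'$ with $f(\eta)=\eta'$, $f(\varepsilon)=\varepsilon'$ and $\tilde\mu'(f(x),f(y))=f(\tilde\mu(x,y))$ for all $x,y\in X$.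 *)

(* Defs.v *)
From Stdlib Require Import Arith.

(* Data of a candidate Frobenius object on a set X:
   - fr_unit  : the relation eta : {*} -> X, i.e. a subset of X
   - fr_counit: the relation epsilon : X -> {*}, i.e. a subset of X
   - fr_mult x y z  means  z \in mu~(x,y)  (relation X x X -> X). *)
Record FrobData (X : Type) := {
  fr_unit : X -> Prop;
  fr_counit : X -> Prop;
  fr_mult : X -> X -> X -> Prop }.

Arguments fr_unit {X} _ _.
Arguments fr_counit {X} _ _.
Arguments fr_mult {X} _ _ _ _.

(* mu o (1 x eta) = 1  and  mu o (eta x 1) = 1 *)
Definition unitality {X : Type} (F : FrobData X) : Prop :=
  (forall x z, (exists e, fr_unit F e /\ fr_mult F x e z) <-> x = z) /\
  (forall x z, (exists e, fr_unit F e /\ fr_mult F e x z) <-> x = z).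

(* mu o (1 x mu) = mu o (mu x 1), as relations X x X x X -> X *)
Definition associativity {X : Type} (F : FrobData X) : Prop :=
  forall x y z w,
    (exists u, fr_mult F y z u /\ fr_mult F x u w) <->
    (exists u, fr_mult F x y u /\ fr_mult F u z w).

(* exists beta : {*} -> X x X with
   (eps x 1) o (mu x 1) o (1 x beta) = 1  and  (1 x eps) o (1 x mu) o (beta x 1) = 1 *)
Definition nondegeneracy {X : Type} (F : FrobData X) : Prop :=
  exists beta : X -> X -> Prop,
    (forall x z,
        (exists y w, beta y z /\ fr_mult F x y w /\ fr_counit F w) <-> x = z) /\
    (forall x y,
        (exists z w, beta y z /\ fr_mult F z x w /\ fr_counit F w) <-> x = y).

Definition is_frobenius {X : Type} (F : FrobData X) : Prop :=
  unitality F /\ associativity F /\ nondegeneracy F.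

Definition is_bijection {X Y : Type} (f : X -> Y) : Prop :=
  exists g : Y -> X, (forall x, g (f x) = x) /\ (forall y, f (g y) = y).

Definition frob_iso {X Y : Type} (F : FrobData X) (G : FrobData Y) : Prop :=
  exists f : X -> Y, is_bijection f /\
    (forall y, fr_unit G y <-> exists x, fr_unit F x /\ f x = y) /\
    (forall y, fr_counit G y <-> exists x, fr_counit F x /\ f x = y) /\
    (forall x1 x2 y, fr_mult G (f x1) (f x2) y <->
                     exists x, fr_mult F x1 x2 x /\ f x = y).

Definition two_element_set (X : Type) : Prop :=
  exists a b : X, a <> b /\ forall x : X, x = a \/ x = b.

Inductive AB : Type := a | b.

Definition mult1 (x y z : AB) : Prop :=
  match x, y with
  | a, a => z = a | a, b => z = b | b, a => z = b | b, b => z = a end.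
Definition mult2 (x y z : AB) : Prop :=
  match x, y with
  | a, a => z = a | a, b => z = b | b, a => z = b | b, b => z = a \/ z = b end.
Definition mult4 (x y z : AB) : Prop :=
  match x, y with
  | a, a => z = a | a, b => z = b | b, a => z = b | b, b => False end.
Definition mult5 (x y z : AB) : Prop :=
  match x, y with
  | a, a => z = a | b, b => z = b | a, b => False | b, a => False end.

Definition model (i : nat) : FrobData AB :=
  match i with
  | 1 => {| fr_unit := fun z => z = a; fr_counit := fun z => z = a; fr_mult := mult1 |}
  | 2 => {| fr_unit := fun z => z = a; fr_counit := fun z => z = a; fr_mult := mult2 |}
  | 3 => {| fr_unit := fun z => z = a; fr_counit := fun z => z = b; fr_mult := mult1 |}
  | 4 => {| fr_unit := fun z => z = a; fr_counit := fun z => z = b; fr_mult := mult4 |}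
  | _ => {| fr_unit := fun z => z = a \/ z = b; fr_counit := fun z => z = a \/ z = b;
            fr_mult := mult5 |}
  end.

(* Main.v *)
Require Import Defs.
From Stdlib Require Import Arith Lia Setoid Classical ClassicalEpsilon.

Lemma ex_AB (P : AB -> Prop) : (exists x, P x) <-> P a \/ P b.
Proof. split; [intros [[|] H]; auto | intros [H|H]; eauto]. Qed.

Ltac abfacts :=
  let H1 := fresh in let H2 := fresh in let H3 := fresh in let H4 := fresh in
  assert (H1 : a = a) by reflexivity; assert (H2 : b = b) by reflexivity;
  assert (H3 : a <> b) by discriminate; assert (H4 : b <> a) by discriminate.

Ltac ab := unfold associativity; intros; repeat setoid_rewrite ex_AB;
  repeat match goal with x : AB |- _ => destruct x end; simpl; abfacts; tauto.

Lemma models_frob : forall i : nat, 1 <= i <= 5 -> is_frobenius (model i).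
Proof.
  intros i Hi.
  destruct i as [|[|[|[|[|[|i]]]]]]; try lia;
  (split; [split; ab | split; [ab | ]]).
  - exists (fun y z => y = z); split; ab.
  - exists (fun y z => y = z); split; ab.
  - exists (fun y z => match y with a => z = b | b => z = a end); split; ab.
  - exists (fun y z => match y with a => z = b | b => z = a end); split; ab.
  - exists (fun y z => y = z); split; ab.
Qed.

Lemma models_distinct : forall i j : nat, 1 <= i <= 5 -> 1 <= j <= 5 ->
     frob_iso (model i) (model j) -> i = j.
Proof.
  intros i j Hi Hj [f [[g [Hgf Hfg]] [Hu [Hc Hm]]]].
  pose proof (Hu a) as U1; pose proof (Hu b) as U2;
  pose proof (Hc a) as C1; pose proof (Hc b) as C2;
  pose proof (Hm b b a) as M1; pose proof (Hm b b b) as M2;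
  pose proof (Hgf a) as G1; pose proof (Hgf b) as G2.
  clear Hu Hc Hm Hfg Hgf.
  setoid_rewrite ex_AB in U1; setoid_rewrite ex_AB in U2;
  setoid_rewrite ex_AB in C1; setoid_rewrite ex_AB in C2;
  setoid_rewrite ex_AB in M1; setoid_rewrite ex_AB in M2.
  destruct (f a) eqn:Ea; destruct (f b) eqn:Eb; rewrite ?Ea, ?Eb in *;
  destruct i as [|[|[|[|[|[|i]]]]]]; try lia;
  destruct j as [|[|[|[|[|[|j]]]]]]; try lia; try reflexivity;
  simpl in *; abfacts; exfalso;
  first [ congruence
        | clear C1 C2 M1 M2; tauto
        | clear U1 U2 M1 M2; tauto
        | clear U1 U2 C1 C2; tauto ].
Qed.

Lemma perm_props {X} (R S : X -> X -> Prop) :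
 (forall x z, (exists y, S y z /\ R x y) <-> x = z) ->
 (forall x y, (exists z, S y z /\ R z x) <-> x = y) ->
 (forall x, exists y, R x y) /\ (forall x y1 y2, R x y1 -> R x y2 -> y1 = y2) /\
 (forall x1 x2 y, R x1 y -> R x2 y -> x1 = x2).
Proof.
  intros H1 H2.
  assert (T : forall x, exists y, S y x /\ R x y) by (intro x; apply H1; reflexivity).
  assert (Fn : forall x y1 y2, R x y1 -> R x y2 -> y1 = y2).
  { intros x y1 y2 R1 R2. destruct (T x) as [y [Sy Ry]].
    assert (y1 = y) by (apply H2; eauto).
    assert (y2 = y) by (apply H2; eauto). congruence. }
  split; [intro x; destruct (T x) as [y [_ Ry]]; eauto|split; [exact Fn|]].
  intros x1 x2 y R1 R2. destruct (T x1) as [y' [Sy Ry]].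
  assert (y' = y) by eauto. subst y'.
  symmetry. apply H1. eauto.
Qed.

Definition gAB {X} (e o : X) (y : AB) : X := match y with a => e | b => o end.

Lemma mk_iso {X} (F : FrobData X) (G : FrobData AB) (e o : X) :
  e <> o -> (forall x, x = e \/ x = o) ->
  (forall y, fr_unit G y <-> fr_unit F (gAB e o y)) ->
  (forall y, fr_counit G y <-> fr_counit F (gAB e o y)) ->
  (forall y1 y2 y, fr_mult G y1 y2 y <->
      fr_mult F (gAB e o y1) (gAB e o y2) (gAB e o y)) ->
  frob_iso F G.
Proof.
  intros Heo Hcov HU HC HM.
  set (f := fun x : X => if excluded_middle_informative (x = e) then a else b).
  assert (fg : forall y, f (gAB e o y) = y).
  { intros []; unfold f; simpl; destruct excluded_middle_informative; congruence. }
  assert (gf : forall x, gAB e o (f x) = x).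
  { intro x; unfold f; destruct excluded_middle_informative; simpl; [congruence|].
    destruct (Hcov x); congruence. }
  exists f. split; [exists (gAB e o); split; assumption|].
  split; [|split].
  - intro y; rewrite HU; split; [intro H; exists (gAB e o y); auto
      | intros [x [Hx <-]]; rewrite gf; exact Hx].
  - intro y; rewrite HC; split; [intro H; exists (gAB e o y); auto
      | intros [x [Hx <-]]; rewrite gf; exact Hx].
  - intros x1 x2 y; rewrite HM, !gf; split; [intro H; exists (gAB e o y); auto
      | intros [x [Hx <-]]; rewrite gf; exact Hx].
Qed.

Section Class.
Context {X : Type} (F : FrobData X) (HF : is_frobenius F).
Let U := fr_unit F.
Let C := fr_counit F.
Let M := fr_mult F.

Lemma P_props :
 (forall x, exists y w, M x y w /\ C w) /\
 (forall x y1 y2 w1 w2, M x y1 w1 -> C w1 -> M x y2 w2 -> C w2 -> y1 = y2) /\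
 (forall x1 x2 y w1 w2, M x1 y w1 -> C w1 -> M x2 y w2 -> C w2 -> x1 = x2).
Proof.
  destruct HF as [_ [_ [beta [B1 B2]]]].
  destruct (perm_props (fun x y => exists w, M x y w /\ C w) beta) as [T [Fn I]].
  - intros x z; rewrite <- B1; unfold M, C; firstorder.
  - intros x y; rewrite <- B2; unfold M, C; firstorder.
  - split; [|split]; [exact T| |]; intros; eauto 6.
Qed.

Lemma single_unit (e o : X) : e <> o -> (forall x, x = e \/ x = o) ->
  U e -> ~ U o -> exists i, 1 <= i <= 5 /\ frob_iso F (model i).
Proof.
  intros Heo Hcov Ue Uo.
  destruct HF as [[HR HL] _].
  assert (Me : forall x z, M e x z <-> x = z).
  { intros x z; rewrite <- HL; split; [intro; exists e; auto|].
    intros [u [Hu Hm]]; destruct (Hcov u); subst; [assumption|contradiction]. }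
  assert (eM : forall x z, M x e z <-> x = z).
  { intros x z; rewrite <- HR; split; [intro; exists e; auto|].
    intros [u [Hu Hm]]; destruct (Hcov u); subst; [assumption|contradiction]. }
  destruct P_props as [T [Fn In]].
  pose proof (Me e e); pose proof (Me e o); pose proof (Me o e); pose proof (Me o o);
  pose proof (eM e e); pose proof (eM e o); pose proof (eM o e); pose proof (eM o o).
  assert (o <> e) by congruence.
  assert (e = e) by reflexivity. assert (o = o) by reflexivity.
  destruct (classic (C e)) as [Ce|Ce]; destruct (classic (C o)) as [Co|Co].
  - exfalso. apply Heo. apply (Fn e e o e o); tauto.
  -
    assert (Mooe : M o o e).
    { destruct (T o) as [y [w [Hm Hw]]].
      destruct (Hcov y); subst y.
      - apply eM in Hm; subst w; contradiction.
      - destruct (Hcov w); subst w; tauto. }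
    destruct (classic (M o o o)) as [Mooo|Mooo].
    + exists 2; split; [lia|]. apply (mk_iso F _ e o); auto;
      intros; repeat match goal with y : AB |- _ => destruct y end;
      simpl; abfacts; fold U C M; tauto.
    + exists 1; split; [lia|]. apply (mk_iso F _ e o); auto;
      intros; repeat match goal with y : AB |- _ => destruct y end;
      simpl; abfacts; fold U C M; tauto.
  -
    assert (Mooo : ~ M o o o).
    { intro Hm. apply Heo. apply (In e o o o o); tauto. }
    destruct (classic (M o o e)) as [Mooe|Mooe].
    + exists 3; split; [lia|]. apply (mk_iso F _ e o); auto;
      intros; repeat match goal with y : AB |- _ => destruct y end;
      simpl; abfacts; fold U C M; tauto.
    + exists 4; split; [lia|]. apply (mk_iso F _ e o); auto;
      intros; repeat match goal with y : AB |- _ => destruct y end;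
      simpl; abfacts; fold U C M; tauto.
  - exfalso. destruct (T e) as [y [w [Hm Hw]]].
    apply Me in Hm; subst w. destruct (Hcov y); subst; contradiction.
Qed.

Lemma double_unit (p q : X) : p <> q -> (forall x, x = p \/ x = q) ->
  U p -> U q -> exists i, 1 <= i <= 5 /\ frob_iso F (model i).
Proof.
  intros Hpq Hcov Up Uq.
  destruct HF as [[HR HL] _].
  assert (R1 : forall x u z, U u -> M x u z -> x = z)
    by (intros x u z Hu Hm; apply HR; eauto).
  assert (L1 : forall x u z, U x -> M x u z -> u = z)
    by (intros x u z Hu Hm; apply HL; eauto).
  assert (Npq : forall z, ~ M p q z).
  { intros z Hm. apply Hpq. transitivity z; [eauto|symmetry; eauto]. }
  assert (Nqp : forall z, ~ M q p z).
  { intros z Hm. apply Hpq. transitivity z; [eauto|symmetry; eauto]. }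
  assert (Mppp : M p p p).
  { destruct (proj2 (HR p p) eq_refl) as [u [Hu Hm]].
    destruct (Hcov u); subst u; [exact Hm|exfalso; eapply Npq; eauto]. }
  assert (Mqqq : M q q q).
  { destruct (proj2 (HR q q) eq_refl) as [u [Hu Hm]].
    destruct (Hcov u); subst u; [exfalso; eapply Nqp; eauto|exact Hm]. }
  assert (Mppq : ~ M p p q) by (intro Hm; apply Hpq; eauto).
  assert (Mqqp : ~ M q q p) by (intro Hm; apply Hpq; symmetry; eauto).
  destruct P_props as [T _].
  assert (Cp : C p).
  { destruct (T p) as [y [w [Hm Hw]]]. destruct (Hcov y); subst y.
    - destruct (Hcov w); subst w; tauto.
    - exfalso; eapply Npq; eauto. }
  assert (Cq : C q).
  { destruct (T q) as [y [w [Hm Hw]]]. destruct (Hcov y); subst y.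
    - exfalso; eapply Nqp; eauto.
    - destruct (Hcov w); subst w; tauto. }
  pose proof (Npq p); pose proof (Npq q); pose proof (Nqp p); pose proof (Nqp q).
  exists 5; split; [lia|]. apply (mk_iso F _ p q); auto;
  intros; repeat match goal with y : AB |- _ => destruct y end;
  simpl; abfacts; fold U C M; tauto.
Qed.

End Class.

Theorem theorem5p1 :
  (forall i : nat, 1 <= i <= 5 -> is_frobenius (model i)) /\
  (forall i j : nat, 1 <= i <= 5 -> 1 <= j <= 5 ->
     frob_iso (model i) (model j) -> i = j) /\
  (forall (X : Type) (F : FrobData X), two_element_set X -> is_frobenius F ->
     exists i : nat, 1 <= i <= 5 /\ frob_iso F (model i)).
Proof.
  split; [exact models_frob|split; [exact models_distinct|]].
  intros X F [p [q [Hpq Hcov]]] HF.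
  destruct (classic (fr_unit F p)) as [Up|Up];
  destruct (classic (fr_unit F q)) as [Uq|Uq].
  - exact (double_unit F HF p q Hpq Hcov Up Uq).
  - exact (single_unit F HF p q Hpq Hcov Up Uq).
  - apply (single_unit F HF q p); auto. intro x; destruct (Hcov x); auto.
  - exfalso. destruct HF as [[HR _] _].
    destruct (proj2 (HR p p) eq_refl) as [u [Hu _]].
    destruct (Hcov u); subst; contradiction.
Qed.
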